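(* A reaction network $(X,\mathscr{R})$ admits an sf-instance if and only if it is conservative.
   Context: A reaction network (RN) $(X,\mathscr{R})$ consists of a finite non-empty set $X$ of species and a finite non-empty set $\mathscr{R}$ of reactions. Each reaction $r$ is given by stoichiometric coefficients $s^-_{xr},s^+_{xr}\in\mathbb{N}_0$. The stoichiometric matrix $S\in\mathbb{Z}^{X\times\mathscr{R}}$ has entries $S_{xr}=s^+_{xr}-s^-_{xr}$. The paper assumes throughout that RNs are closed: every reaction $r$ has $x,y$ with $S_{xr}<0<S_{yr}$. The RN is conservative if there is $m\in\mathbb{R}^X$ with all entries positive and $m^\top S=0$. A sum formula instance (sf-instance) is a matrix $A\in\mathbb{N}_0^{\mathcal{A}\times X}$, for some non-empty finite set $\mathcal{A}$ of ''atoms'', such that: - (i) every column of $A$ is nonzero; - (ii) $AS=0$. *)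

(* Defs.v *)
From HB Require Import structures.
From mathcomp Require Import all_boot all_order all_algebra.
From mathcomp Require Import Rstruct.
From Stdlib Require Rdefinitions.
Set Implicit Arguments. Unset Strict Implicit. Unset Printing Implicit Defensive.
Import Order.TTheory GRing.Theory Num.Theory.
Local Open Scope ring_scope.

Definition stoich (X Rn : finType) (sminus splus : X -> Rn -> nat) (x : X) (r : Rn) : int :=
  (splus x r)%:Z - (sminus x r)%:Z.

Definition closed_RN (X Rn : finType) (sminus splus : X -> Rn -> nat) : Prop :=
  forall r : Rn, exists x y : X,
    stoich sminus splus x r < 0 /\ 0 < stoich sminus splus y r.

Definition conservative (X Rn : finType) (sminus splus : X -> Rn -> nat) : Prop :=
  exists m : X -> Rdefinitions.R,
    (forall x, 0 < m x) /\
    (forall r : Rn, \sum_(x : X) m x * (stoich sminus splus x r)%:~R = 0).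

Definition is_sf_instance (X Rn : finType) (sminus splus : X -> Rn -> nat)
    (Atoms : finType) (a : Atoms -> X -> nat) : Prop :=
  (forall x : X, exists i : Atoms, a i x <> 0%N) /\
  (forall (i : Atoms) (r : Rn), \sum_(x : X) (a i x)%:Z * stoich sminus splus x r = 0).

Definition admits_sf_instance (X Rn : finType) (sminus splus : X -> Rn -> nat) : Prop :=
  exists (Atoms : finType) (a : Atoms -> X -> nat),
    (0 < #|Atoms|)%N /\ is_sf_instance sminus splus a.

(* Main.v *)
Require Import Defs.
From mathcomp Require Import all_boot all_order all_algebra.
From mathcomp Require Import Rstruct.
From Stdlib Require Rdefinitions.
Import Order.TTheory GRing.Theory Num.Theory.
Local Open Scope ring_scope.

Lemma rat_approx (R : archiRealFieldType) (c d : R) : 0 < d ->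
  exists q : rat, `|ratr q - c| < d.
Proof.
move=> d0.
have dV0 : 0 <= d^-1 by rewrite invr_ge0 ltW.
set N := Num.bound (d^-1).
have HN := archi_boundP dV0.
have N0 : 0 < (N%:R : R) by apply: le_lt_trans HN.
exists ((Num.floor (c * N%:R))%:~R / N%:R).
rewrite fmorph_div /= ratr_int ratr_nat.
have := floor_itv (c * N%:R); set k := Num.floor _ => /andP[h1 h2].
rewrite distrC ger0_norm; last first.
  by rewrite subr_ge0 ler_pdivrMr.
rewrite ltrBlDr -ltrBlDl.
rewrite ltr_pdivlMr // mulrBl.
rewrite ltrBlDr -ltrBlDl.
have : 1 < d * N%:R by rewrite -ltr_pdivrMl // mulrC div1r.
rewrite intrD in h2. move=> h3.
rewrite ltrBlDr; apply: (lt_trans h2); rewrite addrC ltrD2r; exact: h3.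
Qed.

Lemma rat_kernel (R : archiRealFieldType) (X Rn : finType) (st : X -> Rn -> int) (m : X -> R) :
 (forall x, 0 < m x) -> (forall r, \sum_x m x * (st x r)%:~R = 0) ->
 exists w : X -> rat, (forall x, 0 < w x) /\ forall r, \sum_x w x * (st x r)%:~R = 0.
Proof.
move=> mpos mker.
pose n := #|X|. pose p := #|Rn|.
pose S : 'M[rat]_(n,p) := \matrix_(i,j) (st (enum_val i) (enum_val j))%:~R.
pose mv : 'rV[R]_n := \row_i m (enum_val i).
have kerm : (mv <= kermx (map_mx ratr S))%MS.
  apply/sub_kermxP; apply/rowP => j; rewrite !mxE.
  under eq_bigr do rewrite !mxE ratr_int.
  rewrite -(big_enum_val (fun x => m x * (st x (enum_val j))%:~R)) /=.
  exact: mker.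
rewrite -map_kermx in kerm.
case/submxP: kerm => c Hc.
pose K := kermx S.
pose Kf : 'M[R]_n := map_mx (@ratr R) K.
pose B : R := 1 + \sum_i \sum_j `|Kf j i|.
have B0 : 0 < B by rewrite /B ltr_wpDr // sumr_ge0 // => i _; rewrite sumr_ge0.
pose mu : R := (1 + \sum_x (m x)^-1)^-1.
have s0 : 0 < 1 + \sum_x (m x)^-1.
  by rewrite ltr_wpDr // sumr_ge0 // => x _; rewrite invr_ge0 ltW.
have mu0 : 0 < mu by rewrite invr_gt0.
have mule x : mu <= m x.
  rewrite /mu -(invrK (m x)) lef_pV2 ?posrE ?invr_gt0 //.
  by rewrite (bigD1 x) //= addrCA lerDl addr_ge0 // sumr_ge0 // => y _; rewrite invr_ge0 ltW.
pose d := mu / B.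
have d0 : 0 < d by rewrite divr_gt0.
have /fin_all_exists [qf Hq] : forall j : 'I_n, exists q : rat, `|ratr q - c 0 j| < d.
  move=> j; exact: rat_approx.
pose q : 'rV[rat]_n := \row_j qf j.
pose wv := q *m K.
exists (fun x => wv 0 (enum_rank x)); split.
  move=> x; rewrite -(ltr0q R).
  set i := enum_rank x.
  have mx : m x = \sum_j c 0 j * Kf j i.
    by move/rowP/(_ i): Hc; rewrite !mxE /i enum_rankK.
  have wx : ratr (wv 0 i) = m x + \sum_j (ratr (qf j) - c 0 j) * Kf j i.
    rewrite mx -big_split /= !mxE rmorph_sum /=; apply: eq_bigr => j _.
    by rewrite !mxE rmorphM /= mulrBl addrC subrK.
  have Hd : `|\sum_j (ratr (qf j) - c 0 j) * Kf j i| < m x.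
    apply: le_lt_trans (ler_norm_sum _ _ _) _.
    apply: (@le_lt_trans _ _ (\sum_j d * `|Kf j i|)).
      by apply: ler_sum => j _; rewrite normrM ler_wpM2r // ltW.
    rewrite -mulr_sumr.
    have sB : \sum_j `|Kf j i| <= B - 1.
      have -> : B - 1 = \sum_i \sum_j `|Kf j i| by rewrite /B addrAC subrr add0r.
      rewrite [X in _ <= X](bigD1 i) //= lerDl sumr_ge0 // => k _.
      by rewrite sumr_ge0.
    apply: (le_lt_trans (ler_wpM2l (ltW d0) sB)).
    apply: (lt_le_trans _ (mule x)).
    by rewrite /d mulrBr mulr1 mulfVK ?(gt_eqF B0) // ltrBlDr ltrDl.
  rewrite wx; set s := \sum_j _ in Hd *.
  have h := lerNnormlW (lexx `|s|).
  apply: (@lt_le_trans _ _ (m x - `|s|)); first by rewrite subr_gt0.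
  by rewrite lerD2l.
move=> r.
have HW : wv *m S = 0 by rewrite -mulmxA mulmx_ker mulmx0.
move/rowP/(_ (enum_rank r)): HW; rewrite !mxE => HW0; apply: etrans HW0.
etransitivity; first exact: (big_enum_val (fun x => wv 0 (enum_rank x) * (st x r)%:~R)).
by apply: eq_bigr => i _; rewrite !mxE enum_valK enum_rankK.
Qed.
Lemma int_scale (X : finType) (w : X -> rat) : (forall x, 0 < w x) ->
  exists a : X -> nat, (forall x, a x <> 0%N) /\
   exists D : rat, 0 < D /\ forall x, ((a x)%:R : rat) = w x * D.
Proof.
move=> wpos.
pose P x := (\prod_(y | y != x) denq (w y))%R.
have P0 x : 0 < P x by apply: prodr_gt0 => y _; exact: denq_gt0.
exists (fun x => absz (numq (w x) * P x)); split.
  move=> x /eqP; rewrite absz_eq0 mulf_eq0 => /orP [].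
  by rewrite numq_eq0 (gt_eqF (wpos x)).
  by rewrite (gt_eqF (P0 x)).
exists (\prod_y denq (w y))%:~R; split.
  by rewrite ltr0z; apply: prodr_gt0 => y _; exact: denq_gt0.
move=> x.
rewrite -[(_)%:R]/((Posz _)%:~R) gez0_abs; last first.
  by rewrite mulr_ge0 ?ltW ?P0 // numq_gt0.
by rewrite (bigD1 x) //= !intrM numqE mulrA.
Qed.

Theorem proposition8 (X Rn : finType) (sminus splus : X -> Rn -> nat) :
  (0 < #|X|)%N -> (0 < #|Rn|)%N -> closed_RN sminus splus ->
  (admits_sf_instance sminus splus <-> conservative sminus splus).
Proof.
move=> _ _ _; split.
  case=> At [a [_ [Hnz Hsum]]].
  exists (fun x => \sum_i ((a i x)%:R : Rdefinitions.R)); split.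
    move=> x; have [i Hi] := Hnz x.
    rewrite (bigD1 i) //= ltr_pwDl ?sumr_ge0 // ltr0n lt0n; exact/eqP.
  move=> r.
  under eq_bigr do rewrite mulr_suml.
  rewrite exchange_big /= big1 // => i _.
  transitivity ((\sum_x (a i x)%:Z * stoich sminus splus x r)%:~R : Rdefinitions.R).
    rewrite [RHS]rmorph_sum; apply: eq_bigr => x _. by rewrite rmorphM.
  by rewrite Hsum.
case=> m [mpos mker].
have [w [wpos wker]] := @rat_kernel _ _ _ _ _ mpos mker.
have [a [anz [D [D0 HD]]]] := @int_scale _ _ wpos.
exists unit, (fun _ => a); split; first by rewrite card_unit.
split; first by move=> x; exists tt.
move=> _ r; apply: (@intr_inj rat).
rewrite rmorph_sum /= rmorph0.
transitivity (D * \sum_x w x * (stoich sminus splus x r)%:~R); last by rewrite wker mulr0.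
rewrite mulr_sumr; apply: eq_bigr => x _.
by rewrite intrM -pmulrn HD (mulrC (w x)) -mulrA.
Qed.
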